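(* Let $a<b$ be positive integers with $\gcd(a,b)=1$, let $\mathcal{E}$ be the equation $ax+by=z$, and let $n\ge R_2(\mathcal{E})$. Let $b^{-1}$ be any integer with $b^{-1}b\equiv 1\pmod a$ and $a^{-1}$ any integer with $a^{-1}a\equiv 1\pmod b$. Then $$M_{\mathcal{E}}(n)\le \sum_{z=a+b}^{\lfloor n/(a(a+b))\rfloor}\left(\frac{z}{ab}-\left\{\frac{b^{-1}z}{a}\right\}-\left\{\frac{a^{-1}z}{b}\right\}+1\right),$$ where $\{t\}=t-\lfloor t\rfloor$ denotes the fractional part.
   Context: For a positive integer $n$ write $[n]=\{1,\dots,n\}$. A $k$-coloring of $[n]$ is a map $\chi:[n]\to\{0,\dots,k-1\}$. A solution to a 3-variable equation $\mathcal{E}$ in $[n]$ is an ordered triple $(x,y,z)\in[n]^3$ satisfying $\mathcal{E}$; it is monochromatic under $\chi$ if $\chi(x)=\chi(y)=\chi(z)$. $\mu_\chi(\mathcal{E},n,k)$ is the number of monochromatic solutions under $\chi$, $M_{\mathcal{E}}(n,k)=\min_\chi \mu_\chi(\mathcal{E},n,k)$ over all $k$-colorings $\chi$ of $[n]$, and $M_{\mathcal{E}}(n)=M_{\mathcal{E}}(n,2)$. The 2-color Rado number $R_2(\mathcal{E})$ is the least integer $N$ such that every 2-coloring of $[N]$ has at least one monochromatic solution to $\mathcal{E}$. *)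

(* Defs.v *)
From HB Require Import structures.
From mathcomp Require Import all_boot all_order all_algebra.
Set Implicit Arguments. Unset Strict Implicit. Unset Printing Implicit Defensive.
Import Order.TTheory GRing.Theory Num.Theory.

(* [n] = {1,...,n} is represented by 'I_n, index i standing for i+1.
   A k-coloring of [n] is a finite function 'I_n -> 'I_k. *)
Definition coloring (n k : nat) := {ffun 'I_n -> 'I_k}.

Definition is_sol (a b : nat) (x y z : nat) : bool := a * x + b * y == z.

Definition mu (a b n k : nat) (chi : coloring n k) : nat :=
  #|[set t : 'I_n * 'I_n * 'I_n |
      is_sol a b t.1.1.+1 t.1.2.+1 t.2.+1 &&
      (chi t.1.1 == chi t.1.2) && (chi t.1.2 == chi t.2)]|.

(* M_E(n,k) = min over colorings; n^3 (= number of triples) is an upper bound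
   on every mu, so it is a neutral initial value for the minimum. *)
Definition Mk (a b n k : nat) : nat :=
  \big[minn/(n ^ 3)%N]_(chi : coloring n k) @mu a b n k chi.

Definition M (a b n : nat) : nat := Mk a b n 2.

Definition rado_prop (a b N : nat) : Prop :=
  forall chi : coloring N 2, (0 < @mu a b N 2 chi)%N.

Definition is_R2 (a b N : nat) : Prop :=
  rado_prop a b N /\ (forall m, (m < N)%N -> ~ rado_prop a b m).

Local Open Scope ring_scope.
Definition fracpart (t : rat) : rat := t - (Num.floor t)%:~R.

(* Main.v *)
Require Import Defs.
From mathcomp Require Import all_boot all_order all_algebra.
From mathcomp Require Import zify ring lra.
Import Order.TTheory GRing.Theory Num.Theory.
Local Open Scope ring_scope.

Lemma frac_div (m : int) (d : nat) : (0 < d)%N ->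
  fracpart (m%:~R / d%:R : rat) = ((m %% d%:Z)%Z)%:~R / d%:R.
Proof.
move=> d0.
have dR : (0 : rat) < d%:R by rewrite ltr0n.
have dz : d%:Z != 0 by rewrite eqz_nat -lt0n.
have dp : 0 < d%:Z by rewrite ltz_nat.
have r0 := modz_ge0 m dz.
have r1 := ltz_pmod m dp.
rewrite /fracpart.
set q := (m %/ d%:Z)%Z; set r := (m %% d%:Z)%Z.
have Em : (m%:~R : rat) = q%:~R * d%:R + r%:~R.
  by rewrite {1}(divz_eq m d%:Z) intrD intrM -/q -/r pmulrn.
have -> : Num.floor (m%:~R / d%:R : rat) = q.
  apply: floor_def.
  rewrite Em intrD.
  apply/andP; split.
    by rewrite ler_pdivlMr // lerDl ler0z.
  rewrite ltr_pdivrMr // mulrDl mul1r ltrD2l; by move: r1; rewrite -(ltr_int rat) -pmulrn.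
rewrite Em mulrDl mulfK; last by rewrite gt_eqF.
by rewrite addrAC subrr add0r.
Qed.
Lemma key_int (a b : nat) (binv ainv w : int) : (0 < a)%N -> (0 < b)%N -> coprime a b ->
  (binv * b%:Z = 1 %[mod a%:Z])%Z ->
  (ainv * a%:Z = 1 %[mod b%:Z])%Z -> 0 <= w ->
  exists k : int, w - b%:Z * ((binv * w) %% a%:Z)%Z - a%:Z * ((ainv * w) %% b%:Z)%Z
     = k * (a%:Z * b%:Z) /\ -1 <= k.
Proof.
move=> a0 b0 cab Hb Ha w0.
have /dvdzP [c Hc] : (a%:Z %| binv * b%:Z - 1)%Z by rewrite -eqz_mod_dvd; apply/eqP.
have /dvdzP [e He] : (b%:Z %| ainv * a%:Z - 1)%Z by rewrite -eqz_mod_dvd; apply/eqP.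
set r := ((binv * w) %% a%:Z)%Z; set s := ((ainv * w) %% b%:Z)%Z.
have Er := divz_eq (binv * w) a%:Z; rewrite -/r in Er.
have Es := divz_eq (ainv * w) b%:Z; rewrite -/s in Es.
set q1 := ((binv * w) %/ a%:Z)%Z in Er; set q2 := ((ainv * w) %/ b%:Z)%Z in Es.
have az : a%:Z != 0 by rewrite eqz_nat -lt0n.
have bz : b%:Z != 0 by rewrite eqz_nat -lt0n.
have ap : 0 < a%:Z by rewrite ltz_nat.
have bp : 0 < b%:Z by rewrite ltz_nat.
have r0 := modz_ge0 (binv * w) az. have r1 := ltz_pmod (binv * w) ap.
have s0 := modz_ge0 (ainv * w) bz. have s1 := ltz_pmod (ainv * w) bp.
rewrite -/r -/s in r0 r1 s0 s1.
set D := w - _ - _.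
have E1 : D = a%:Z * (- c * w + b%:Z * q1 - s).
  have h1 := congr1 (fun t => b%:Z * t) Er.
  have h2 := congr1 (fun t => w * t) Hc.
  rewrite /D; simpl in h1, h2; lia.
have E2 : D = b%:Z * (- e * w + a%:Z * q2 - r).
  have h1 := congr1 (fun t => a%:Z * t) Es.
  have h2 := congr1 (fun t => w * t) He.
  rewrite /D; simpl in h1, h2; lia.
have : (b%:Z %| (- c * w + b%:Z * q1 - s) * a%:Z)%Z.
  by apply/dvdzP; exists (- e * w + a%:Z * q2 - r); rewrite mulrC -E1 E2 mulrC.
rewrite Gauss_dvdzl; last by rewrite coprimezE /= coprime_sym.
case/dvdzP=> k Hk.
exists k; split; first by rewrite E1 Hk; ring.
have hr : b%:Z * r < b%:Z * a%:Z by rewrite ltr_pM2l.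
have hs : a%:Z * s < a%:Z * b%:Z by rewrite ltr_pM2l.
have : k * (a%:Z * b%:Z) > (-2) * (a%:Z * b%:Z).
  have -> : k * (a%:Z * b%:Z) = D by rewrite E1 Hk; ring.
  rewrite /D; lia.
rewrite ltr_pM2r; last by rewrite mulr_gt0.
lia.
Qed.
Definition Sz (a b : nat) (binv ainv : int) (z : nat) : rat :=
  (z%:R / (a * b)%:R : rat)
       - fracpart (((binv * z%:Z)%:~R : rat) / a%:R)
       - fracpart (((ainv * z%:Z)%:~R : rat) / b%:R) + 1.

Lemma S_eq (a b : nat) (binv ainv : int) (z : nat) : (0 < a)%N -> (0 < b)%N ->
  Sz a b binv ainv z = (z%:Z - b%:Z * ((binv * z%:Z) %% a%:Z)%Z - a%:Z * ((ainv * z%:Z) %% b%:Z)%Z)%:~R / (a * b)%:R + 1.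
Proof.
move=> a0 b0; rewrite /Sz !frac_div //.
move: ((binv * z%:Z) %% a%:Z)%Z ((ainv * z%:Z) %% b%:Z)%Z => r s.
rewrite !intrD !mulrNz !intrM -!pmulrn natrM.
have ha : (a%:R : rat) != 0 by rewrite pnatr_eq0 -lt0n.
have hb : (b%:R : rat) != 0 by rewrite pnatr_eq0 -lt0n.
field; by rewrite ha hb.
Qed.
Lemma mod_inv (a b : nat) (ainv : int) (x y : nat) : (0 < b)%N ->
  (ainv * a%:Z = 1 %[mod b%:Z])%Z ->
  ((ainv * (a * x + b * y)%N%:Z) %% b%:Z)%Z = (x %% b)%N.
Proof.
move=> b0 Ha.
have /dvdzP [e He] : (b%:Z %| ainv * a%:Z - 1)%Z by rewrite -eqz_mod_dvd; apply/eqP.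
have -> : ainv * (a * x + b * y)%N%:Z = (e * x%:Z + ainv * y%:Z) * b%:Z + x%:Z.
  have h := congr1 (fun t => x%:Z * t) He; simpl in h.
  rewrite PoszD !PoszM; lia.
by rewrite modzMDl modz_nat.
Qed.

Lemma sol_struct (a b : nat) (binv ainv : int) (x y : nat) : (0 < a)%N -> (0 < b)%N ->
  (binv * b%:Z = 1 %[mod a%:Z])%Z ->
  (ainv * a%:Z = 1 %[mod b%:Z])%Z ->
  (x%:Z = (x %/ b)%N%:Z * b%:Z + ((ainv * (a * x + b * y)%N%:Z) %% b%:Z)%Z) /\
  ((a * x + b * y)%N%:Z - b%:Z * ((binv * (a * x + b * y)%N%:Z) %% a%:Z)%Z
     - a%:Z * ((ainv * (a * x + b * y)%N%:Z) %% b%:Z)%Z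
    = ((x %/ b + y %/ a)%N)%:Z * (a%:Z * b%:Z)).
Proof.
move=> a0 b0 Hb Ha.
rewrite mod_inv //.
have -> : (a * x + b * y)%N = (b * y + a * x)%N by rewrite addnC.
rewrite mod_inv //.
have hx := divn_eq x b. have hy := divn_eq y a.
move: (x %/ b)%N (x %% b)%N (y %/ a)%N (y %% a)%N hx hy => qx rx qy ry -> -> /=.
split; lia.
Qed.
Lemma count_z (a b n : nat) (binv ainv : int) (z : nat) :
  (0 < a)%N -> (0 < b)%N -> coprime a b ->
  (binv * b%:Z = 1 %[mod a%:Z])%Z ->
  (ainv * a%:Z = 1 %[mod b%:Z])%Z ->
  (#|[set t : 'I_n * 'I_n * 'I_n | is_sol a b t.1.1.+1 t.1.2.+1 t.2.+1 && (t.2 == z :> nat)]|)%:R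
    <= Sz a b binv ainv z.+1.
Proof.
move=> a0 b0 cab Hb Ha.
set B := [set t | _].
have w0 : (0 : int) <= (z.+1)%:Z by [].
have [k0 [Hk0 k0ge]] := key_int a b binv ainv (z.+1)%:Z a0 b0 cab Hb Ha w0.
have abp : (0 : int) < a%:Z * b%:Z by rewrite mulr_gt0 // ltz_nat.
have SE : Sz a b binv ainv z.+1 = k0%:~R + 1.
  rewrite S_eq // Hk0 intrM -!pmulrn natrM mulfK //.
  by rewrite mulf_neq0 // pnatr_eq0 -lt0n.
rewrite SE.
case: (set_0Vmem B) => [-> | [t0 t0B]].
  have h : ((-1)%:~R : rat) <= k0%:~R by rewrite ler_int.
  rewrite cards0 /=; move: h; rewrite (_ : (-1)%:~R = -1 :> rat) //; lra.
have solB : forall t, t \in B ->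
   [/\ (a * t.1.1.+1 + b * t.1.2.+1)%N = z.+1, t.2 = z :> nat &
       (t.1.1.+1 %/ b + t.1.2.+1 %/ a)%N%:Z = k0].
  move=> t; rewrite inE /is_sol => /andP [/eqP E /eqP E2]; rewrite E2 in E; split => //.
  have [_ h2] := sol_struct a b binv ainv t.1.1.+1 t.1.2.+1 a0 b0 Hb Ha.
  rewrite E Hk0 in h2.
  by apply: (mulIf (lt0r_neq0 abp)); rewrite h2.
have [_ _ Ek0] := solB t0 t0B.
set K := (t0.1.1.+1 %/ b + t0.1.2.+1 %/ a)%N in Ek0.
rewrite -Ek0.
set f := fun t : 'I_n * 'I_n * 'I_n => (t.1.1.+1 %/ b)%N.
have : (size (map f (enum B)) <= size (iota 0 K.+1))%N.
  apply: uniq_leq_size.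
    rewrite map_inj_in_uniq ?enum_uniq //.
    move=> t1 t2; rewrite !mem_enum => t1B t2B; rewrite /f /= => Ef.
    have [E1 Z1 _] := solB t1 t1B; have [E2 Z2 _] := solB t2 t2B.
    have [h1 _] := sol_struct a b binv ainv t1.1.1.+1 t1.1.2.+1 a0 b0 Hb Ha.
    have [h2 _] := sol_struct a b binv ainv t2.1.1.+1 t2.1.2.+1 a0 b0 Hb Ha.
    rewrite E1 in h1; rewrite E2 in h2.
    have ex : t1.1.1.+1 = t2.1.1.+1 by apply/eqP; rewrite -eqz_nat h1 h2 Ef.
    have : b * t1.1.2.+1 = b * t2.1.2.+1.
      by apply/eqP; rewrite -(eqn_add2l (a * t1.1.1.+1)) {2}ex E1 E2.
    move/eqP; rewrite eqn_pmul2l // => /eqP ey.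
    have ex' : t1.1.1 = t2.1.1 by apply: val_inj; case: ex.
    have ey' : t1.1.2 = t2.1.2 by apply: val_inj; case: ey.
    have ez : t1.2 = t2.2 by apply: ord_inj; rewrite Z1 Z2.
    move: ex' ey' ez; case: t1 {t1B E1 Z1 h1 ex ey Ef} => [[? ?] ?]; case: t2 {t2B E2 Z2 h2} => [[? ?] ?] /= -> -> -> //.
  move=> k /mapP [t]; rewrite mem_enum => tB ->.
  rewrite mem_iota /= add0n ltnS.
  have [_ _ Et] := solB t tB.
  rewrite -Ek0 in Et; case: Et => <-; exact: leq_addr.
rewrite size_map size_iota -cardE => hc.
by rewrite -pmulrn natr1 ler_nat.
Qed.
Lemma mono_small (a b n x y z : nat) : (0 < a)%N -> (a < b)%N ->
  (0 < x)%N -> (0 < y)%N -> (z <= n)%N -> (a * x + b * y)%N = z ->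
  let N' := (n %/ (a * (a + b)))%N in let T := (n %/ a)%N in
  let bl := fun v : nat => (N' < v <= T)%N in
  bl x = bl y -> bl y = bl z -> (z <= N')%N.
Proof.
move=> a0 ab x0 y0 zn E N' T bl Exy Eyz.
have L0 : (0 < a + b)%N by rewrite addn_gt0 a0.
have xT : (x <= T)%N.
  rewrite leq_divRL // mulnC; apply: leq_trans zn; rewrite -E; exact: leq_addr.
have yT : (y <= T)%N.
  rewrite leq_divRL // mulnC; apply: leq_trans zn; rewrite -E.
  apply: leq_trans (leq_addl _ _); rewrite leq_mul2r (ltnW ab); exact: orbT.
have NT : N' = (T %/ (a + b))%N by rewrite /N' /T divnMA.
rewrite /bl xT yT !andbT in Exy Eyz.
case: (ltnP N' x) => hx.
  have hy : (N' < y)%N by rewrite -Exy.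
  have : (T < (a + b) * N'.+1)%N by rewrite NT mulnC ltn_ceil.
  have h1 : (a * N'.+1 <= a * x)%N by rewrite leq_mul2l hx orbT.
  have h2 : (b * N'.+1 <= b * y)%N by rewrite leq_mul2l hy orbT.
  rewrite mulnDl => h3.
  have zT : (T < z)%N by rewrite -E; lia.
  move: Eyz; rewrite hy; move/esym/andP => [_]; rewrite leqNgt zT //.
have hy : (y <= N')%N by rewrite leqNgt -Exy -leqNgt.
have : ((T %/ (a + b)) * (a + b) <= T)%N by exact: leq_trunc_div.
rewrite -NT => h0.
have h1 : (a * x <= a * N')%N by rewrite leq_mul2l hx orbT.
have h2 : (b * y <= b * N')%N by rewrite leq_mul2l hy orbT.
have zT : (z <= T)%N by rewrite -E; lia.
move: Eyz; rewrite ltnNge hy /= zT andbT => /esym/negbT; rewrite -leqNgt //.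
Qed.
Lemma bigmin_le_seq (I : eqType) (x : nat) (F : I -> nat) (j : I) (s : seq I) :
  j \in s -> (\big[minn/x]_(i <- s) F i <= F j)%N.
Proof.
elim: s => // h s IH; rewrite inE big_cons => /orP [/eqP -> | js].
  exact: geq_minl.
exact: leq_trans (geq_minr _ _) (IH js).
Qed.
Lemma bigmin_le (I : finType) (x : nat) (F : I -> nat) (j : I) :
  (\big[minn/x]_(i : I) F i <= F j)%N.
Proof. exact: bigmin_le_seq (mem_index_enum j). Qed.
Theorem theorem4 (a b n : nat) (binv ainv : int) :
  (0 < a)%N -> (a < b)%N -> coprime a b ->
  (exists N : nat, is_R2 a b N /\ (N <= n)%N) ->
  (binv * b%:Z = 1 %[mod a%:Z])%Z ->
  (ainv * a%:Z = 1 %[mod b%:Z])%Z ->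
  (M a b n)%:R <=
    \sum_((a + b)%N <= z < (n %/ (a * (a + b))).+1)
      ((z%:R / (a * b)%:R : rat)
       - fracpart (((binv * z%:Z)%:~R : rat) / a%:R)
       - fracpart (((ainv * z%:Z)%:~R : rat) / b%:R) + 1).
Proof.
move=> a0 ab cab _ Hb Ha.
have b0 : (0 < b)%N by apply: leq_trans ab.
set N' := (n %/ (a * (a + b)))%N.
pose T := (n %/ a)%N.
pose bl := fun v : nat => (N' < v <= T)%N.
pose chi0 : coloring n 2 := [ffun i : 'I_n => if bl i.+1 then (ord_max : 'I_2) else ord0].
have chiE : forall i j : 'I_n, (chi0 i == chi0 j) = (bl i.+1 == bl j.+1).
  by move=> i j; rewrite !ffunE; case: (bl i.+1); case: (bl j.+1).
have leM : (M a b n <= @mu a b n 2 chi0)%N.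
  exact: bigmin_le.
apply: le_trans (_ : (@mu a b n 2 chi0)%:R <= _); first by rewrite ler_nat.
rewrite /mu.
set A := [set t | _].
have cardA : #|A| = (\sum_(j : 'I_n) #|[set t in A | t.2 == j]|)%N.
  rewrite -sum1_card (partition_big (fun t => t.2) xpredT) //=.
  by apply: eq_bigr => j _; rewrite -sum1_card; apply: eq_bigl => t; rewrite inE.
rewrite cardA natr_sum.
pose G := fun w : nat => if ((a + b) <= w <= N')%N then Sz a b binv ainv w else 0.
apply: le_trans (_ : \sum_(j : 'I_n) G j.+1 <= _).
  apply: ler_sum => j _; rewrite /G.
  case: ifP => hj.
    apply: le_trans (count_z a b n binv ainv j a0 b0 cab Hb Ha).
    rewrite ler_nat; apply: subset_leq_card; apply/subsetP => t.
    by rewrite !inE => /andP [/andP [/andP [hs _] _] /eqP tj]; rewrite hs -tj eqxx.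
  suff -> : [set t in A | t.2 == j] = set0 by rewrite cards0.
  apply/setP => t; rewrite !inE; apply/negbTE/negP.
  move=> /andP [/andP [/andP [hs c1] c2] /eqP tj].
  rewrite !chiE in c1 c2.
  move: hs; rewrite /is_sol => /eqP E.
  have := @mono_small a b n t.1.1.+1 t.1.2.+1 t.2.+1 a0 ab isT isT (ltn_ord _) E.
  move=> /(_ (eqP c1) (eqP c2)) hz.
  move: hj; rewrite -tj hz andbT -E.
  by rewrite leq_add // leq_pmulr.
rewrite le_eqVlt; apply/orP; left; apply/eqP.
rewrite -(big_mkord xpredT (fun j => G j.+1)).
have -> : \sum_(0 <= j < n) G j.+1 = \sum_(1 <= w < n.+1) G w by rewrite big_add1.
have G0 : G 0%N = 0 by rewrite /G leqn0 addn_eq0 (negbTE (lt0n_neq0 a0)).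
have -> : \sum_(1 <= w < n.+1) G w = \sum_(0 <= w < n.+1) G w.
  by rewrite [in RHS]big_ltn // G0 add0r.
rewrite big_mkord /G -big_mkcond /=.
rewrite big_geq_mkord.
change (\sum_(i < n.+1 | (a + b <= i <= N')%N) Sz a b binv ainv i = \sum_(i < N'.+1 | true && (a + b <= i)%N) Sz a b binv ainv i).
rewrite (@big_ord_widen_cond _ _ _ N'.+1 n.+1); last by rewrite ltnS leq_div.
by apply: eq_bigl => i; rewrite ltnS.
Qed.
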